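(* Let $d\le n'\le n$ be integers. There exist hypergraphs $H=(V,E)$ with $|V|=n$, all edges of size $d$, and $|E|=\binom{n'}{d}$, such that every non-adaptive generalized group testing solution for $H$ has size $\Omega\!\left(\min\{n',\, d\log|E|/\log d\}\right)=\Omega\!\left(\min\{n',\, d^2\log n'/\log d\}\right)$.
   Context: A set $T\subseteq V$ (a ''test'') separates two sets $A,B\subseteq V$ if exactly one of $A\cap T$, $B\cap T$ is empty. A non-adaptive generalized group testing solution for a hypergraph $H=(V,E)$ is a family $\mathcal{T}$ of subsets of $V$ such that for every two distinct $A,B\in E$ some $T\in\mathcal{T}$ separates $A$ and $B$. The $\Omega(\cdot)$ hides an absolute constant. *)

(* Defs.v *)
From mathcomp Require Import all_boot.
From Stdlib Require Import Reals.
Set Implicit Arguments. Unset Strict Implicit. Unset Printing Implicit Defensive.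

Definition separates (V : finType) (T A B : {set V}) : bool :=
  (A :&: T == set0) != (B :&: T == set0).

Definition ngt_solution (V : finType) (E Tests : {set {set V}}) : Prop :=
  forall A B, A \in E -> B \in E -> A != B ->
    exists2 T, T \in Tests & separates T A B.

(* Main.v *)
Require Import Defs.
From mathcomp Require Import all_boot.
From Stdlib Require Import Reals.
From mathcomp Require Import zify.
From Stdlib Require Import Lra.
Set Implicit Arguments. Unset Strict Implicit. Unset Printing Implicit Defensive.

Lemma pad (T : finType) (A Wd : {set T}) m :
  Wd \subset A -> #|Wd| <= m -> m <= #|A| ->
  exists Q : {set T}, [/\ Wd \subset Q, Q \subset A & #|Q| = m].
Proof.
elim: m => [|m IH] WA Hw HmA.
  exists set0; have -> : Wd = set0 by apply: cards0_eq; lia.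
  by split; rewrite ?sub0set ?cards0.
case: (ltnP m #|Wd|) => Hm.
  by exists Wd; split => //; apply/eqP; rewrite eqn_leq Hw Hm.
have [Q [WQ QA HQ]] := IH WA Hm (ltnW HmA).
have : 0 < #|A :\: Q| by rewrite cardsD (setIidPr QA); lia.
case/card_gt0P => z; rewrite in_setD => /andP[zQ zA].
exists (z |: Q); split.
- by apply: subset_trans WQ (subsetUr _ _).
- by rewrite subUset sub1set zA QA.
- by rewrite cardsU1 zQ HQ.
Qed.

Lemma one_exc (T : finType) (L : {set T}) (p : pred T) :
  (forall x y, x \in L -> y \in L -> p x -> p y -> x = y) ->
  #|L| <= #|[set x in L | ~~ p x]| + 1.
Proof.
move=> H.
case: (pickP (fun x => (x \in L) && p x)) => [b /andP[bL pb] | nob].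
- have : L \subset b |: [set x in L | ~~ p x].
    apply/subsetP => x xL; rewrite !inE xL /=.
    case: (boolP (p x)) => px; last by rewrite orbT.
    by rewrite (H x b xL bL px pb) eqxx.
  move/subset_leq_card; rewrite cardsU1; case: (_ \in _); lia.
- have : L \subset [set x in L | ~~ p x].
    apply/subsetP => x xL; rewrite !inE xL /=; move: (nob x); rewrite xL /= => ->; by [].
  move/subset_leq_card; lia.
Qed.

Section Gen.
Variables (V W : finType) (C : V -> {set W}).
Definition U (S : {set V}) : {set W} := \bigcup_(s in S) C s.

Lemma inU (S : {set V}) T : (T \in U S) = [exists s in S, T \in C s].
Proof.
apply/bigcupP/existsP => [[s Hs HT]|[s /andP[Hs HT]]]; first by exists s; rewrite Hs.
by exists s.
Qed.

Lemma U_mono (A B : {set V}) : A \subset B -> U A \subset U B.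
Proof.
move=> AB; apply/subsetP => T; rewrite !inU => /existsP[s /andP[Hs HT]].
by apply/existsP; exists s; rewrite (subsetP AB).
Qed.

Lemma C_sub_U x (A : {set V}) : x \in A -> C x \subset U A.
Proof. by move=> Hx; apply: (bigcup_sup x). Qed.

Lemma U_setU1 x (A : {set V}) : U (x |: A) = C x :|: U A.
Proof.
apply/setP => T; rewrite in_setU !inU; apply/existsP/orP.
- case=> s /andP[]; rewrite in_setU1 => /orP[/eqP->|Hs] HT; first by left.
  by right; apply/existsP; exists s; rewrite Hs.
- case=> [HT|/existsP[s /andP[Hs HT]]]; first by exists x; rewrite setU11.
  by exists s; rewrite in_setU1 Hs orbT.
Qed.

Lemma U_setU (A B : {set V}) : U (A :|: B) = U A :|: U B.
Proof.
apply/setP => T; rewrite in_setU !inU; apply/existsP/orP.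
- case=> s /andP[]; rewrite in_setU => /orP[Hs|Hs] HT.
  + by left; apply/existsP; exists s; rewrite Hs.
  + by right; apply/existsP; exists s; rewrite Hs.
- case=> /existsP[s /andP[Hs HT]]; by exists s; rewrite in_setU Hs ?orbT.
Qed.

Lemma U0 : U set0 = set0.
Proof. by apply/setP => T; rewrite inU in_set0; apply/existsP => -[s]; rewrite in_set0. Qed.

Variables (P : {set V}) (d : nat).
Hypothesis Hsep : forall A B : {set V}, A \subset P -> B \subset P ->
  #|A| = d -> #|B| = d -> U A = U B -> A = B.
Hypothesis HP : d < #|P|.
Hypothesis Hd0 : 0 < d.

Lemma collision x y (Wd : {set V}) :
  x \in P -> y \in P -> x != y -> Wd \subset P :\: [set x; y] -> #|Wd| <= d.-1 ->
  C x \subset U Wd :|: C y -> C y \subset U Wd :|: C x -> False.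
Proof.
move=> xP yP xy WP Wc Cx Cy.
have [Q [WQ QA HQ]] : exists Q : {set V}, [/\ Wd \subset Q, Q \subset P :\: [set x; y] & #|Q| = d.-1].
  apply: pad => //.
  rewrite cardsD (setIidPr _); last by rewrite subUset !sub1set xP yP.
  rewrite cards2 xy; lia.
have xQ : x \notin Q by apply/negP => /(subsetP QA); rewrite !inE eqxx.
have yQ : y \notin Q by apply/negP => /(subsetP QA); rewrite !inE eqxx orbT.
have QP : Q \subset P by apply: subset_trans QA (subsetDl _ _).
have UWQ := U_mono WQ.
have E : U (x |: Q) = U (y |: Q).
  have UQ : U Wd \subset U Q := UWQ.
  rewrite !U_setU1; apply/eqP; rewrite eqEsubset; apply/andP; split.
  - apply/subsetP => T; rewrite !in_setU => /orP[HT|HT]; last by rewrite HT orbT.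
    move: (subsetP Cx T HT); rewrite in_setU => /orP[/(subsetP UQ)->|->]; by rewrite ?orbT.
  - apply/subsetP => T; rewrite !in_setU => /orP[HT|HT]; last by rewrite HT orbT.
    move: (subsetP Cy T HT); rewrite in_setU => /orP[/(subsetP UQ)->|->]; by rewrite ?orbT.
have d0 := Hd0.
have Hc : forall z, z \notin Q -> #|z |: Q| = d by move=> z zQ; rewrite cardsU1 zQ HQ; lia.
have := @Hsep (x |: Q) (y |: Q).
rewrite !subUset !sub1set xP yP QP (Hc x xQ) (Hc y yQ) => /(_ isT isT erefl erefl E) /setP /(_ x).
by rewrite !in_setU1 eqxx (negPf xQ) (negbTE xy).
Qed.


Variable r : nat.
Hypothesis Hr : r.*2 < d.

Definition bad x := [exists S : {set V}, [&& S \subset P :\ x, #|S| <= r & C x \subset U S]].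

Lemma bad_uniq x y : x \in P -> y \in P -> bad x -> bad y -> x = y.
Proof.
move=> xP yP /existsP[Sx /and3P[SxP Sxr CxS]] /existsP[Sy /and3P[SyP Syr CyS]].
apply/eqP; apply/negPn/negP => xy.
pose Wd := (Sx :|: Sy) :\: [set x; y].
apply: (@collision x y Wd) => //.
- apply/subsetP => z; rewrite !inE => /andP[zxy /orP[zS|zS]].
  + by rewrite zxy; move: (subsetP SxP z zS); rewrite !inE => /andP[].
  + by rewrite zxy; move: (subsetP SyP z zS); rewrite !inE => /andP[].
- have := subset_leq_card (subsetDl (Sx :|: Sy) [set x; y]).
  rewrite /Wd; have := cardsU Sx Sy; lia.
- apply: subset_trans CxS _; rewrite setUC -U_setU1; apply: U_mono.
  apply/subsetP => z zS; move: (subsetP SxP z zS); rewrite !inE => /andP[zx zP].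
  by rewrite zS (negPf zx) /=; case: (z == y).
- apply: subset_trans CyS _; rewrite setUC -U_setU1; apply: U_mono.
  apply/subsetP => z zS; move: (subsetP SyP z zS); rewrite !inE => /andP[zy zP].
  by rewrite zS (negPf zy) /= ?orbT; case: (z == x); rewrite ?orbT.
Qed.

Definition G := [set x in P | ~~ bad x].

Lemma G_large : #|P| <= #|G| + 1.
Proof. apply: one_exc => x y xP yP; exact: bad_uniq. Qed.

Lemma G_CF x (S : {set V}) : x \in G -> S \subset G -> x \notin S -> #|S| <= r ->
  ~~ (C x \subset U S).
Proof.
rewrite inE => /andP[xP nb] SG xS Sr; apply/negP => CxS; move/negP: nb; apply.
apply/existsP; exists S; apply/and3P; split => //.
apply/subsetP => z zS; rewrite !inE.
have := subsetP SG z zS; rewrite inE => /andP[-> _]; rewrite andbT.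
by apply/eqP => zx; move: zS; rewrite zx (negPf xS).
Qed.

Lemma tests_ge_d (Tests : {set W}) : (forall x, C x \subset Tests) -> d <= #|Tests|.
Proof.
move=> HT.
have [L [_ LP HL]] : exists L : {set V}, [/\ set0 \subset L, L \subset P & #|L| = d.+1].
  by apply: pad; rewrite ?sub0set ?cards0.
pose own x := C x :\: U (L :\ x).
have Hone := @one_exc _ L (fun x => own x == set0).
have Hone' : #|L| <= #|[set x in L | own x != set0]| + 1.
  apply: Hone => x y xL yL /eqP ox /eqP oy; apply/eqP/negPn/negP => xy.
  have LP' : forall z, z \in L -> z \in P := subsetP LP.
  apply: (@collision x y (L :\: [set x; y])) => //; try exact: LP'.
  - apply/subsetP => z; rewrite !inE => /andP[-> /LP' ->]; by [].
  - rewrite cardsD (setIidPr _); last by rewrite subUset !sub1set xL yL.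
    rewrite cards2 xy HL; lia.
  - move/eqP: ox; rewrite setD_eq0 => ox; apply: subset_trans ox _.
    rewrite setUC -U_setU1; apply: U_mono; apply/subsetP => z; rewrite !inE.
    by case/andP => zx ->; rewrite (negPf zx) andbT /=; case: (z == y).
  - move/eqP: oy; rewrite setD_eq0 => oy; apply: subset_trans oy _.
    rewrite setUC -U_setU1; apply: U_mono; apply/subsetP => z; rewrite !inE.
    by case/andP => zy ->; rewrite (negPf zy) andbT orbF /=; case: (z == x).
have [x0 _] : exists x0, x0 \in L by apply/set0Pn; rewrite -card_gt0 HL.
pose g T := odflt x0 [pick x in L | T \in own x].
have : [set x in L | own x != set0] \subset g @: Tests.
  apply/subsetP => x; rewrite inE => /andP[xL /set0Pn[T Tx]].
  apply/imsetP; exists T; first by move: Tx; rewrite inE => /andP[_ /(subsetP (HT x))].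
  rewrite /g; case: pickP => [x' /andP[x'L Tx'] | /(_ x)]; last by rewrite xL Tx.
  rewrite /=; apply/eqP/negPn/negP => x'x; move: Tx'; rewrite inE inU => /andP[/negP[]].
  apply/existsP; exists x; rewrite !inE xL andbT x'x /=.
  by move: Tx; rewrite inE => /andP[].
move/subset_leq_card => H1; have := leq_imset_card g Tests; lia.
Qed.

End Gen.

Section Fur.
Variables (V W : finType) (C : V -> {set W}) (Tests : {set W}).
Hypothesis HT : forall x, C x \subset Tests.
Variables (G : {set V}) (r k : nat).
Hypothesis CF : forall x (S : {set V}), x \in G -> S \subset G -> x \notin S -> #|S| <= r ->
  ~~ (C x \subset U C S).

Definition Sm := [set Z : {set W} | (Z \subset Tests) && (#|Z| <= k)].

Lemma cover m (D : {set V}) (Y : {set W}) : #|Y| <= m * k ->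
  (forall Z : {set W}, Z \subset Y -> #|Z| <= k -> exists2 y : V, y \in D & Z \subset C y) ->
  exists S : {set V}, [/\ S \subset D, #|S| <= m & Y \subset U C S].
Proof.
elim: m Y => [|m IH] Y HY H.
  exists set0; split; rewrite ?sub0set ?cards0 //.
  have -> : Y = set0 by apply: cards0_eq; lia.
  exact: sub0set.
case: (leqP #|Y| k) => Yk.
  have [y yD Yy] := H Y (subxx _) Yk.
  exists [set y]; split; rewrite ?sub1set ?yD ?cards1 //.
  by apply: subset_trans Yy (C_sub_U _ (set11 y)).
have [Z [_ ZY HZ]] : exists Z : {set W}, [/\ set0 \subset Z, Z \subset Y & #|Z| = k].
  by apply: pad; rewrite ?sub0set ?cards0 //; lia.
have [y yD Zy] := H Z ZY (eq_leq HZ).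
have [S [SD Sm' YS]] : exists S : {set V}, [/\ S \subset D, #|S| <= m & Y :\: C y \subset U C S].
  apply: IH.
  - rewrite cardsD.
    have : Z \subset Y :&: C y by rewrite subsetI ZY Zy.
    move/subset_leq_card; rewrite HZ. lia.
  - move=> Z' Z'Y Z'k; apply: H => //; apply: subset_trans Z'Y (subsetDl _ _).
exists (y |: S); split.
- by rewrite subUset sub1set yD SD.
- rewrite cardsU1; case: (_ \notin _); lia.
- rewrite U_setU1; apply/subsetP => T TY.
  case: (boolP (T \in C y)) => Ty; first by rewrite in_setU Ty.
  by rewrite in_setU (subsetP YS) ?orbT // in_setD Ty TY.
Qed.

Lemma fur_stop j (R : {set V}) : R \subset G -> #|R| + j = r ->
  (forall x, x \in G :\: R -> #|C x :&: (Tests :\: U C R)| <= j * k) ->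
  #|G| <= r + #|Sm|.
Proof.
move=> RG HR Hsmall.
pose ownb x (Z : {set W}) := [&& Z \in Sm, Z \subset C x & [forall y in G :\: R, (y != x) ==> ~~ (Z \subset C y)]].
have Hown : forall x, x \in G :\: R -> [exists Z, ownb x Z].
  move=> x xGR; case: (boolP [exists Z, ownb x Z]) => // Hn; exfalso.
  have [S [SD Sj YS]] : exists S : {set V}, [/\ S \subset (G :\: R) :\ x, #|S| <= j & (C x :&: (Tests :\: U C R)) \subset U C S].
    apply: (@cover j) ; first exact: (Hsmall x xGR).
    move=> Z ZY Zk.
    have ZCx : Z \subset C x by apply: subset_trans ZY (subsetIl _ _).
    have ZSm : Z \in Sm by rewrite inE Zk andbT; apply: subset_trans ZCx (HT x).
    move/existsPn: Hn => /(_ Z); rewrite /ownb ZSm ZCx /= => /forallPn[y].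
    rewrite !negb_imply => /and4P[yGR yx ZCy _].
    by exists y => //; rewrite in_setD1 yx yGR.
  move: xGR; rewrite in_setD => /andP[xR xG].
  have xS : x \notin S by apply/negP => /(subsetP SD); rewrite in_setD1 eqxx.
  have := @CF x (R :|: S) xG.
  rewrite subUset RG (subset_trans SD) ?subsetDl ?(subset_trans (subsetDl _ _) (subsetDl _ _)) //.
  rewrite in_setU (negPf xR) (negPf xS) /=.
  have : #|R :|: S| <= r by have := cardsU R S; lia.
  move=> HRS /(_ isT isT HRS) /negP; apply.
  rewrite U_setU; apply/subsetP => T TC.
  case: (boolP (T \in U C R)) => TR; first by rewrite in_setU TR.
  rewrite in_setU (subsetP YS) ?orbT //.
  by rewrite in_setI TC in_setD TR (subsetP (HT x)).
pose f x := odflt set0 [pick Z | ownb x Z].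
have Hf : forall x, x \in G :\: R -> ownb x (f x).
  move=> x /Hown /existsP[Z HZ]; rewrite /f; case: pickP => [Z' ->|/(_ Z)] //.
  by rewrite HZ.
have inj : {in G :\: R &, injective f}.
  move=> x y xGR yGR Efxy; apply/eqP/negPn/negP => xy.
  have := Hf x xGR; have := Hf y yGR; rewrite /ownb -Efxy.
  case/and3P => _ fy _ /and3P[_ _ /forallP/(_ y)]; rewrite yGR (eq_sym y) xy /=.
  by rewrite fy.
have : f @: (G :\: R) \subset Sm.
  by apply/subsetP => Z /imsetP[x xGR ->]; case/and3P: (Hf x xGR).
move/subset_leq_card; rewrite card_in_imset // cardsDS //.
have := subset_leq_card RG; lia.
Qed.

Lemma fur j : forall R : {set V}, R \subset G -> #|R| + j = r ->
  2 * #|Tests :\: U C R| <= k * j * j.+1 + 2 * j -> #|G| <= r + #|Sm|.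
Proof.
elim: j => [|j IH] R RG HR HX.
- apply: (fur_stop RG HR) => x _.
  have := subset_leq_card (subsetIr (C x) (Tests :\: U C R)). lia.
case: (pickP (fun x => (x \in G :\: R) && (j.+1 * k < #|C x :&: (Tests :\: U C R)|))).
- move=> x /andP[xGR Hx].
  move: xGR; rewrite in_setD => /andP[xR xG].
  apply: (IH (x |: R)).
  + by rewrite subUset sub1set xG RG.
  + rewrite cardsU1 xR /=; lia.
  + rewrite U_setU1 setUC -setDDl cardsD.
    have E1 : (Tests :\: U C R) :&: C x = C x :&: (Tests :\: U C R) by rewrite setIC.
    rewrite E1.
    move: Hx HX; set a := #|_ :&: _|; set b := #|_ :\: _|. nia.
- move=> Hno; apply: (fur_stop RG HR) => x xGR.
  by move: (Hno x); rewrite xGR /= => /negbT; rewrite -leqNgt.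
Qed.
End Fur.

Lemma card_Sm (W : finType) (Tests : {set W}) k :
  #|[set Z : {set W} | (Z \subset Tests) && (#|Z| <= k)]| <= \sum_(i < k.+1) 'C(#|Tests|, i).
Proof.
elim: k => [|k IH].
  rewrite big_ord_recr big_ord0 /= add0n -cards_draws.
  apply: subset_leq_card; apply/subsetP => Z; rewrite !inE => /andP[-> /=]; lia.
rewrite big_ord_recr /= -cards_draws.
apply: leq_trans (leq_add IH (leqnn _)).
apply: leq_trans (leq_card_setU _ _).1.
apply: subset_leq_card; apply/subsetP => Z; rewrite !inE => /andP[-> /=] HZ.
by move: HZ; rewrite leq_eqVlt ltnS orbC.
Qed.

Lemma sum_bin1 t : \sum_(i < 2) 'C(t, i) = t.+1.
Proof. by rewrite !big_ord_recr big_ord0 /= bin0 bin1 add0n add1n. Qed.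

Lemma ffact_le_exp n m : n ^_ m <= expn n m.
Proof.
elim: m => [|m IH]; first by rewrite ffactn0 expn0.
by rewrite ffactnSr expnS mulnC leq_mul // leq_subr.
Qed.

Lemma bin_le_exp n m : 'C(n, m) <= expn n m.
Proof.
apply: leq_trans (ffact_le_exp n m); rewrite -bin_ffact.
by apply: leq_pmulr; rewrite fact_gt0.
Qed.

Lemma binsum_bound t k : k <= t ->
  (\sum_(i < k.+1) 'C(t, i)) * (expn k k * expn t (t - k)) <= expn (t + k) t.
Proof.
move=> kt; rewrite expnDn big_distrl /=.
have -> : t.+1 = k.+1 + (t - k) by lia.
rewrite big_split_ord /=.
apply: leq_trans (leq_addr _ _).
apply: leq_sum => i _ /=.
rewrite leq_mul2l; apply/orP; right.
have ik : i <= k by have := ltn_ord i; lia.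
have -> : expn k k = expn k (k - i) * expn k i by rewrite -expnD; congr (expn _ _); lia.
have -> : expn t (t - i) = expn t (k - i) * expn t (t - k) by rewrite -expnD; congr (expn _ _); lia.
have h : expn k (k - i) <= expn t (k - i).
  elim: (k - i) => // e IH; rewrite !expnS; exact: leq_mul.
rewrite [X in _ <= X]mulnAC.
by apply: leq_mul => //; apply: leq_mul.
Qed.

Lemma natRle (m n : nat) : m <= n -> (INR m <= INR n)%R.
Proof. by move/leP; apply: le_INR. Qed.

Lemma INR_muln (m n : nat) : INR (m * n) = (INR m * INR n)%R.
Proof. by rewrite -multE mult_INR. Qed.

Lemma INR_addn (m n : nat) : INR (m + n) = (INR m + INR n)%R.
Proof. by rewrite -plusE plus_INR. Qed.

Lemma INR_expn (m n : nat) : INR (expn m n) = (INR m ^ n)%R.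
Proof. elim: n => [|n IH]; first by []. by rewrite expnS INR_muln IH. Qed.

Lemma INR_pos (m : nat) : 0 < m -> (0 < INR m)%R.
Proof. by move=> H; apply: lt_0_INR; apply/ltP. Qed.

Lemma ln_le' x y : (0 < x)%R -> (x <= y)%R -> (ln x <= ln y)%R.
Proof.
move=> hx hxy; case: (Rle_lt_or_eq_dec _ _ hxy) => h.
- by apply: Rlt_le; apply: ln_increasing.
- by rewrite h; apply: Rle_refl.
Qed.

Lemma ln_natle (m n : nat) : 0 < m -> m <= n -> (ln (INR m) <= ln (INR n))%R.
Proof. by move=> h1 h2; apply: ln_le'; [apply: INR_pos | apply: natRle]. Qed.

Lemma ln_diff a b : (0 < a)%R -> (0 < b)%R -> (ln b - ln a <= (b - a) / a)%R.
Proof.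
move=> ha hb.
have h1 := exp_ineq1_le (b / a - 1).
have h2 : (ln (b / a) <= b / a - 1)%R.
  rewrite -[X in (_ <= X)%R]ln_exp; apply: ln_le'.
    by apply: Rdiv_lt_0_compat.
  lra.
have h3 : ((b - a) / a = b / a - 1)%R by field; lra.
rewrite h3; rewrite /Rdiv ln_mult ?ln_Rinv in h2; try by apply: Rinv_0_lt_compat.
  rewrite /Rdiv; lra.
all: by [].
Qed.

Lemma ln_d_ge1 (d : nat) : 3 <= d -> (1 <= ln (INR d))%R.
Proof.
move=> hd; rewrite -[1%R]ln_exp; apply: ln_le'; first exact: exp_pos.
have := exp_le_3; have : (3 <= INR d)%R by have := natRle hd; rewrite /= ; lra.
lra.
Qed.

Lemma real_main (d t k S n' e : nat) :
  3 <= d -> 0 < k -> k <= t ->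
  S * (expn k k * expn t (t - k)) <= expn (t + k) t -> 0 < S ->
  t <= k * (d * d) -> n' <= S * S -> 0 < n' -> e <= expn n' d -> 0 < e ->
  d * d * k <= 24 * t ->
  (INR d * ln (INR e) <= 144 * INR t * ln (INR d))%R.
Proof.
move=> h1 k0 kt h3 S0 h4 h5 n0 h6 e0 h7.
have t0 : 0 < t by apply: leq_trans kt.
have d0 : 0 < d by apply: leq_trans h1.
have Rk := INR_pos k0; have Rt := INR_pos t0; have RS := INR_pos S0.
have Rd := INR_pos d0.
have lnd1 := ln_d_ge1 h1.
have L1 : (ln (INR S) + INR k * ln (INR k) + (INR t - INR k) * ln (INR t)
            <= INR t * ln (INR t + INR k))%R.
  have P0 : 0 < S * (expn k k * expn t (t - k)) by rewrite !muln_gt0 S0 !expn_gt0 k0 t0.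
  have := ln_natle P0 h3.
  rewrite !INR_muln !INR_expn INR_addn.
  rewrite !ln_mult ?ln_pow //; try lra; try (apply: pow_lt; lra); try (apply: Rmult_lt_0_compat; apply: pow_lt; lra).
  by rewrite minus_INR; [lra | apply/leP].
have L2 : (INR t * ln (INR t + INR k) <= INR t * ln (INR t) + INR k)%R.
  have := ln_diff Rt (Rplus_lt_0_compat _ _ Rt Rk).
  have -> : ((INR t + INR k - INR t) / INR t = INR k / INR t)%R by field; lra.
  move=> H; have := Rmult_le_compat_l _ _ _ (Rlt_le _ _ Rt) H.
  have -> : (INR t * (INR k / INR t) = INR k)%R by field; lra.
  lra.
have L3 : (ln (INR t) <= ln (INR k) + 2 * ln (INR d))%R.
  have := ln_natle t0 h4; rewrite !INR_muln ln_mult ?ln_mult; try lra; try nra.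
have LS : (ln (INR S) <= 3 * INR k * ln (INR d))%R.
  have : (ln (INR S) <= INR k + INR k * (ln (INR t) - ln (INR k)))%R by nra.
  move=> H; have : (INR k * (ln (INR t) - ln (INR k)) <= INR k * (2 * ln (INR d)))%R.
    apply: Rmult_le_compat_l; lra.
  nra.
have Ln : (ln (INR n') <= 6 * INR k * ln (INR d))%R.
  have := ln_natle n0 h5; rewrite INR_muln ln_mult; lra.
have Le : (ln (INR e) <= INR d * ln (INR n'))%R.
  have := ln_natle e0 h6; rewrite INR_expn ln_pow; [lra | exact: INR_pos].
have R7 : (INR d * INR d * INR k <= 24 * INR t)%R.
  have := natRle h7; rewrite !INR_muln (INR_IZR_INZ 24) /=; lra.
have : (INR d * ln (INR e) <= INR d * (INR d * (6 * INR k * ln (INR d))))%R.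
  apply: Rmult_le_compat_l; first lra.
  apply: Rle_trans Le _; apply: Rmult_le_compat_l; lra.
have : (INR d * INR d * INR k * ln (INR d) <= 24 * INR t * ln (INR d))%R.
  apply: Rmult_le_compat_r; lra.
nra.
Qed.

Lemma fin_a (a b t : R) : (a <= 200 * t)%R -> (1/200 * Rmin a b <= t)%R.
Proof. move=> h; have := Rmin_l a b; lra. Qed.

Lemma fin_b (a x l t : R) : (0 < l)%R -> (x <= 200 * t * l)%R -> (1/200 * Rmin a (x / l) <= t)%R.
Proof.
move=> hl h; have := Rmin_r a (x / l).
have : (x / l <= 200 * t)%R.
  apply: (Rmult_le_reg_r l) => //; rewrite /Rdiv Rmult_assoc Rinv_l; lra.
lra.
Qed.

Lemma card_P n n' : n' <= n -> #|[set x : 'I_n | x < n']| = n'.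
Proof.
move=> h.
have -> : [set x : 'I_n | x < n'] = (widen_ord h) @: [set: 'I_n'].
  apply/setP => x; rewrite inE; apply/idP/imsetP.
  - move=> xn; exists (Ordinal xn) => //; by apply: val_inj.
  - by case=> y _ ->; rewrite /= ltn_ord.
rewrite card_imset ?cardsT ?card_ord //.
by move=> a b /(congr1 val) /= /val_inj.
Qed.

Theorem claim5 :
  exists c : R, (0 < c)%R /\
  forall n n' d : nat, (2 <= d)%N -> (d <= n')%N -> (n' <= n)%N ->
  exists E : {set {set 'I_n}},
    (forall A, A \in E -> #|A| = d) /\ #|E| = 'C(n', d) /\
    forall Tests : {set {set 'I_n}}, ngt_solution E Tests ->
      (c * Rmin (INR n') (INR d * ln (INR #|E|) / ln (INR d)) <= INR #|Tests|)%R.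
Proof.
exists (1/200)%R; split; first lra.
move=> n n' d d2 dn' n'n.
set P := [set x : 'I_n | x < n'].
have cardP : #|P| = n' by apply: card_P.
exists [set A : {set 'I_n} | A \subset P & #|A| == d].
split; first by move=> A; rewrite inE => /andP[_ /eqP].
split; first by rewrite cards_draws cardP.
set E := [set A : {set 'I_n} | A \subset P & #|A| == d].
move=> Tests sol.
pose C := fun x : 'I_n => [set T in Tests | x \in T].
have HT : forall x, C x \subset Tests by move=> x; apply/subsetP => T; rewrite inE => /andP[].
have Hmem : forall (A : {set 'I_n}) T, T \in Tests -> (T \in U C A) = (A :&: T != set0).
  move=> A T TT; rewrite inU; apply/existsP/set0Pn => [[s /andP[sA]]|[s]].
  - by rewrite inE => /andP[_ sT]; exists s; rewrite inE sA sT.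
  - by rewrite inE => /andP[sA sT]; exists s; rewrite sA inE TT sT.
have Hsep : forall A B : {set 'I_n}, A \subset P -> B \subset P ->
    #|A| = d -> #|B| = d -> U C A = U C B -> A = B.
  move=> A B AP BP Ad Bd UAB; apply/eqP/negPn/negP => AB.
  have AE : A \in E by rewrite inE AP Ad eqxx.
  have BE : B \in E by rewrite inE BP Bd eqxx.
  have [T TT] := sol A B AE BE AB.
  rewrite /separates -(negbK (A :&: T == set0)) -(negbK (B :&: T == set0)) -!Hmem // UAB.
  by rewrite eqxx.
have Hcount : #|E| <= expn 2 #|Tests|.
  rewrite -card_powerset.
  have <- : #|[set U C A | A in E]| = #|E|.
    apply: card_in_imset => A B; rewrite !inE => /andP[AP /eqP Ad] /andP[BP /eqP Bd].
    exact: Hsep.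
  apply: subset_leq_card; apply/subsetP => X /imsetP[A _ ->].
  rewrite inE; apply/subsetP => T; rewrite inU => /existsP[s /andP[_]].
  exact: (subsetP (HT s)).
idtac "MAIN". Show.
have heq : #|E| = 'C(n', d) by rewrite /E cards_draws cardP.
have e0 : 0 < #|E| by rewrite heq bin_gt0.
have lnd0 : (0 < ln (INR d))%R.
  rewrite -ln_1; apply: ln_increasing; first lra.
  have := natRle d2; rewrite /=; lra.
have Rt0 : (0 <= INR #|Tests|)%R by apply: pos_INR.
have lne0 : (0 <= ln (INR #|E|))%R.
  rewrite -ln_1; have := ln_natle (isT : 0 < 1) e0; rewrite /=; lra.
case: (leqP d 4) => d4.
  apply: fin_b => //.
  have h1 : (ln (INR #|E|) <= INR #|Tests| * ln (INR d))%R.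
    have := ln_natle e0 Hcount; rewrite INR_expn ln_pow; last by rewrite /=; lra.
    move=> H; apply: Rle_trans H _; apply: Rmult_le_compat_l => //.
    apply: ln_le'; first (rewrite /=; lra).
    by have := natRle d2; rewrite /=.
  have h2 : (INR d <= 4)%R by have := natRle d4; rewrite /=; lra.
  have h3 : (0 <= INR #|Tests| * ln (INR d))%R by apply: Rmult_le_pos; lra.
  have h4 : (INR d * ln (INR #|E|) <= 4 * ln (INR #|E|))%R by apply: Rmult_le_compat_r.
  apply: Rle_trans h4 _. nra.
have HP : d < #|P| \/ n' = d by rewrite cardP; lia.
case: HP => [HP|n'd].
2:{ apply: fin_b => //.
    have -> : #|E| = 1 by rewrite heq n'd binn.
    rewrite (_ : INR 1 = 1%R) // ln_1 Rmult_0_r; apply: Rmult_le_pos => //; lra. }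
have Hd0 : 0 < d by lia.
set r := (d.-1)./2.
have Hr : r.*2 < d by rewrite /r; lia.
have r2 : 2 <= r by rewrite /r; lia.
have dr : d <= 2 * r + 2 by rewrite /r; lia.
case: (ltnP n' (4 * d)) => n'4.
  have := tests_ge_d Hsep HP Hd0 Hr HT => dt.
  have h200 : n' <= 200 * #|Tests| by lia.
  apply: fin_a; have := natRle h200.
  by rewrite INR_muln (_ : INR 200 = 200%R) // (INR_IZR_INZ 200).
have HG := G_large Hsep HP Hd0 Hr.
have CF : forall x (S : {set 'I_n}), x \in G C P r -> S \subset G C P r -> x \notin S ->
    #|S| <= r -> ~~ (C x \subset U C S) := fun x S => @G_CF _ _ C P r x S.
set Q := r * r.+1.
have Q6 : 6 <= Q by rewrite /Q; nia.
have Qd : Q <= d * d by rewrite /Q; nia.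
have dQ : d * d <= 6 * Q by rewrite /Q; nia.
set k := (2 * #|Tests|) %/ Q + 1.
have kQ1 : 2 * #|Tests| < k * Q by rewrite /k; lia.
have kQ2 : (k - 1) * Q <= 2 * #|Tests| by rewrite /k addnK; rewrite leq_trunc_div.
have Hf : #|G C P r| <= r + #|Sm Tests k|.
  apply: (@fur _ _ C Tests HT (G C P r) r k CF r set0 (sub0set _)); first by rewrite cards0.
  rewrite U0 setD0 -mulnA -/Q; lia.
have HS := card_Sm Tests k.
set Sk := \sum_(i < k.+1) 'C(#|Tests|, i) in HS.
have Hn : n' <= 1 + r + Sk.
  rewrite /Sm in Hf; rewrite cardP in HG.
  have := leq_trans HG (leq_add (leq_trans Hf (leq_add (leqnn r) HS)) (leqnn 1)); lia.
case: (ltnP (2 * #|Tests|) Q) => tq.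
  have k1 : k = 1 by rewrite /k divn_small.
  move: Hn; rewrite /Sk k1 sum_bin1 => Hn.
  have h200 : n' <= 200 * #|Tests| by lia.
  apply: fin_a; have := natRle h200.
  by rewrite INR_muln (_ : INR 200 = 200%R) // (INR_IZR_INZ 200).
have k0 : 0 < k by rewrite /k; lia.
have kt : k <= #|Tests| by nia.
have Sk0 : 0 < Sk by rewrite /Sk big_ord_recl bin0; lia.
have h4 : #|Tests| <= k * (d * d) by nia.
have h5 : n' <= Sk * Sk by nia.
have h6 : #|E| <= expn n' d by rewrite heq; apply: bin_le_exp.
have h7 : d * d * k <= 24 * #|Tests| by nia.
have d3 : 2 < d by lia.
have n0 : 0 < n' by lia.
have H := real_main d3 k0 kt (binsum_bound kt) Sk0 h4 h5 n0 h6 e0 h7.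
apply: fin_b => //.
apply: Rle_trans H _.
have := Rmult_le_pos _ _ Rt0 (Rlt_le _ _ lnd0); nra.
Qed.
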